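(* Let $2\le R\le K$, $\epsilon\in(0,1)$, and let $\mathcal{Y}_1,\ldots,\mathcal{Y}_m\subseteq[K]$ with $|\mathcal{Y}_i|=R$ for all $i$. Let $Z$ be uniform on $[K]$ and let $Y=(Y_1,\ldots,Y_m)$ be such that, conditionally on $Z=k$, the $Y_i$ are independent, with $Y_i=k$ almost surely if $k\in\mathcal{Y}_i$ and $Y_i$ uniform on $\mathcal{Y}_i$ if $k\notin\mathcal{Y}_i$. If some decoder $g:\mathcal{Y}_1\times\cdots\times\mathcal{Y}_m\to[K]$ satisfies $\mathbb{P}(g(Y)\ne Z)\le\epsilon$, then $$m\ \ge\ \left\lceil \frac{K}{R}\cdot\frac{(1-\epsilon)\log K-\log 2}{\log R}\right\rceil.$$
   Context: $[K]=\{1,\ldots,K\}$; $\log$ denotes the natural logarithm. *)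

(* Defs.v *)
From HB Require Import structures.
From mathcomp Require Import all_boot all_order all_algebra.
From mathcomp Require Import reals exp.
Set Implicit Arguments. Unset Strict Implicit. Unset Printing Implicit Defensive.
Import Order.TTheory GRing.Theory Num.Theory.
Local Open Scope ring_scope.

Definition chan (R : realType) (K Rs : nat) (Yi : {set 'I_K}) (k y : 'I_K) : R :=
  if k \in Yi then (y == k)%:R else (y \in Yi)%:R / Rs%:R.

Definition joint (R : realType) (K Rs m : nat) (Ys : 'I_m -> {set 'I_K})
  (k : 'I_K) (y : {ffun 'I_m -> 'I_K}) : R :=
  K%:R^-1 * \prod_(i < m) chan R Rs (Ys i) k (y i).

Definition err_prob (R : realType) (K Rs m : nat) (Ys : 'I_m -> {set 'I_K})
  (g : {ffun 'I_m -> 'I_K} -> 'I_K) : R :=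
  \sum_(k : 'I_K) \sum_(y : {ffun 'I_m -> 'I_K} | g y != k) joint R Rs Ys k y.

(* Main.v *)
Require Import Defs.
From HB Require Import structures.
From mathcomp Require Import all_boot all_order all_algebra.
From mathcomp Require Import reals exp ring lra.
Import Order.TTheory GRing.Theory Num.Theory.
Set Implicit Arguments. Unset Strict Implicit.
Local Open Scope ring_scope.

Lemma term_ineq (R : realType) (c q t L : R) : 0 <= c -> 0 <= q -> 0 < t ->
  (c != 0 -> 0 < q /\ ln (c / q) = L) -> c * ln t + c - q * t <= c * L.
Proof.
move=> c0 q0 t0 H.
have [->|cn0] := eqVneq c 0.
  by rewrite !mul0r addr0 sub0r oppr_le0 mulr_ge0 // ltW.
have [qp hL] := H cn0.
have cp : 0 < c by rewrite lt_def cn0 c0.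
set u := q * t / c.
have up : 0 < u by rewrite /u !(mulr_gt0, invr_gt0).
have h1 : ln u <= u - 1.
  have := @le_ln1Dx R (u - 1); rewrite [1 + _]addrC subrK; apply.
  by rewrite ltrBrDl subrr.
have h2 : ln u = ln t - L.
  rewrite -hL /u -ln_div ?posrE ?mulr_gt0 ?divr_gt0 ?invr_gt0 //.
  by congr ln; field; rewrite (gt_eqF qp) cn0.
have : c * ln u <= c * (u - 1) by rewrite ler_wpM2l // ltW.
rewrite h2 /u mulrBr mulrBr mulr1 [c * (q * t / c)]mulrC divfK ?gt_eqF //.
move=> h; rewrite -subr_ge0; rewrite -subr_ge0 in h.
by move: h; congr (0 <= _); ring.
Qed.

Lemma ind_sum (R : realType) K Rs (Yi : {set 'I_K}) : (0 < Rs)%N -> #|Yi| = Rs ->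
  \sum_j ((j \in Yi)%:R / Rs%:R : R) = 1.
Proof.
move=> Rp cY; rewrite -mulr_suml.
have -> : \sum_j ((j \in Yi)%:R : R) = \sum_(j in Yi) 1.
  by rewrite [RHS]big_mkcond; apply: eq_bigr => j _; case: (j \in Yi).
by rewrite sumr_const cY divff // pnatr_eq0 -lt0n.
Qed.

Lemma chan_sum (R : realType) K Rs (Yi : {set 'I_K}) k : (0 < Rs)%N -> #|Yi| = Rs ->
  \sum_j chan R Rs Yi k j = 1.
Proof.
move=> Rp cY; rewrite /chan; case: (k \in Yi); last exact: ind_sum.
rewrite (bigD1 k) //= eqxx big1 ?addr0 // => j /negbTE -> //.
Qed.

Lemma chan_ge0 (R : realType) K Rs (Yi : {set 'I_K}) k j : 0 <= chan R Rs Yi k j.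
Proof. by rewrite /chan; case: ifP => _; rewrite ?divr_ge0 ?ler0n. Qed.

Definition qy (R : realType) K Rs m (Ys : 'I_m -> {set 'I_K}) (y : {ffun 'I_m -> 'I_K}) : R :=
  \prod_i ((y i \in Ys i)%:R / Rs%:R).

Definition dd K m (Ys : 'I_m -> {set 'I_K}) (k : 'I_K) : nat := \sum_i (k \in Ys i : nat).

Lemma prod_chan_eq (R : realType) K Rs m (Ys : 'I_m -> {set 'I_K}) k (y : {ffun 'I_m -> 'I_K}) : (0 < Rs)%N ->
  \prod_i chan R Rs (Ys i) k (y i) != 0 ->
  \prod_i chan R Rs (Ys i) k (y i) = Rs%:R ^+ dd Ys k * qy R Rs Ys y.
Proof.
move=> Rp /prodf_neq0 H.
rewrite /dd /qy -prodrXr -big_split /=; apply: eq_bigr => i _.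
have := H i isT; rewrite /chan; case: ifP => kY.
  case: (y i =P k) => [-> _|_]; last by rewrite eqxx.
  by rewrite kY /= expr1 mul1r mulfV // pnatr_eq0 -lt0n.
by rewrite expr0 mul1r.
Qed.

Lemma sumC (R : realType) K Rs m (Ys : 'I_m -> {set 'I_K}) k : (0 < Rs)%N ->
  (forall i, #|Ys i| = Rs) ->
  \sum_(y : {ffun 'I_m -> 'I_K}) \prod_i chan R Rs (Ys i) k (y i) = 1.
Proof.
move=> Rp cY; rewrite -(bigA_distr_bigA (fun i j => chan R Rs (Ys i) k j)) /=.
by rewrite big1 // => i _; apply: chan_sum.
Qed.

Lemma sumQ (R : realType) K Rs m (Ys : 'I_m -> {set 'I_K}) : (0 < Rs)%N ->
  (forall i, #|Ys i| = Rs) ->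
  \sum_(y : {ffun 'I_m -> 'I_K}) qy R Rs Ys y = 1.
Proof.
move=> Rp cY; rewrite /qy.
rewrite -(bigA_distr_bigA (fun i j => ((j \in Ys i)%:R / Rs%:R : R))) /=.
by rewrite big1 // => i _; apply: ind_sum.
Qed.

Lemma sum_dd K Rs m (Ys : 'I_m -> {set 'I_K}) : (forall i, #|Ys i| = Rs) ->
  (\sum_k dd Ys k = m * Rs)%N.
Proof.
move=> cY; rewrite /dd exchange_big /=.
rewrite (eq_bigr (fun _ => Rs)) ?sum_nat_const ?card_ord // => i _.
rewrite -(cY i) -sum1_card [RHS]big_mkcond; apply: eq_bigr => k _.
by case: (k \in Ys i).
Qed.

Theorem theorem4 (R : realType) (K Rs m : nat) (eps : R)
  (Ys : 'I_m -> {set 'I_K}) (g : {ffun 'I_m -> 'I_K} -> 'I_K) :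
  (2 <= Rs)%N -> (Rs <= K)%N -> 0 < eps -> eps < 1 ->
  (forall i, #|Ys i| = Rs) ->
  err_prob R Rs Ys g <= eps ->
  Num.ceil ((K%:R / Rs%:R) * (((1 - eps) * ln (K%:R : R) - ln 2) / ln (Rs%:R : R)))
    <= (m%:Z).
Proof.
move=> R2 RK e0 e1 cY herr.
have Rp : (0 < Rs)%N by apply: leq_trans R2.
have K2 : (2 <= K)%N by apply: leq_trans RK.
have Kr : (0:R) < K%:R by rewrite ltr0n; apply: leq_trans K2.
have Kn0 : (K%:R : R) != 0 by rewrite gt_eqF.
have Rr : (1:R) < Rs%:R by rewrite ltr1n.
have Rn0 : (Rs%:R : R) != 0 by rewrite pnatr_eq0 -lt0n.
have lnR : 0 < ln (Rs%:R : R) by apply: ln_gt0.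
have lnK : 0 <= ln (K%:R : R) by apply: ln_ge0; rewrite ler1n; apply: leq_trans K2.
pose t (k : 'I_K) (y : {ffun 'I_m -> 'I_K}) : R := if g y == k then K%:R / 2 else 2^-1.
pose Lk (k : 'I_K) : R := (dd Ys k)%:R * ln (Rs%:R : R).
pose J k y := joint R Rs Ys k y.
pose Q (y : {ffun 'I_m -> 'I_K}) : R := K%:R^-1 * qy R Rs Ys y.
have Jge0 k y : 0 <= J k y.
  by rewrite /J /joint mulr_ge0 ?invr_ge0 ?ler0n // prodr_ge0 // => i _; apply: chan_ge0.
have qge0 y : 0 <= qy R Rs Ys y.
  by rewrite /qy prodr_ge0 // => i _; rewrite divr_ge0 ?ler0n.
have key : \sum_k \sum_y (J k y * ln (t k y) + J k y - Q y * t k y)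
    <= \sum_k \sum_y J k y * Lk k.
  apply: ler_sum => k _; apply: ler_sum => y _.
  apply: term_ineq; first exact: Jge0.
  - by rewrite /Q mulr_ge0 ?invr_ge0 ?ler0n.
  - by rewrite /t; case: (g y == k); rewrite ?divr_gt0 ?invr_gt0.
  move=> Pn0; move: (Pn0); rewrite /J /joint mulf_eq0 negb_or => /andP [_ Cn0].
  have E := prod_chan_eq Rp Cn0.
  have qn0 : qy R Rs Ys y != 0 by move: Cn0; rewrite E mulf_eq0 negb_or => /andP [].
  have qp : 0 < qy R Rs Ys y by rewrite lt_def qn0 qge0.
  split; first by rewrite /Q mulr_gt0 ?invr_gt0.
  rewrite /J /joint /Q E.
  have -> : K%:R^-1 * (Rs%:R ^+ dd Ys k * qy R Rs Ys y) / (K%:R^-1 * qy R Rs Ys y)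
     = Rs%:R ^+ dd Ys k by field; rewrite qn0 Kn0.
  by rewrite lnXn ?(lt_trans ltr01) // /Lk mulr_natl.
have hRHS : \sum_k \sum_y J k y * Lk k = K%:R^-1 * ln (Rs%:R : R) * (m * Rs)%:R.
  rewrite -(sum_dd cY) natr_sum mulr_sumr; apply: eq_bigr => k _.
  under eq_bigr => y _ do rewrite /J /joint mulrAC.
  by rewrite -mulr_sumr sumC // mulr1 /Lk; ring.
have Bsum : \sum_k \sum_y J k y = 1.
  under eq_bigr => k _ do rewrite /J /joint -mulr_sumr sumC // mulr1.
  by rewrite sumr_const card_ord -[_ *+ K]mulr_natr mulVf.
have Csum : \sum_k \sum_y Q y * t k y <= 1.
  rewrite exchange_big /= -(sumQ R Rp cY); apply: ler_sum => y _.
  rewrite -mulr_sumr /Q -mulrA.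
  have tle : \sum_k t k y <= K%:R.
    rewrite (bigD1 (g y)) //= /t eqxx.
    have : \sum_(k | k != g y) (if g y == k then K%:R / 2 else 2^-1) <= \sum_(k : 'I_K) (2^-1 : R).
      rewrite [X in _ <= X](bigD1 (g y)) //=.
      rewrite (eq_bigr (fun _ => 2^-1)) ?lerDr ?invr_ge0 ?ler0n // => k kn.
      by rewrite eq_sym (negbTE kn).
    rewrite sumr_const card_ord => h.
    rewrite [X in _ <= X](_ : _ = K%:R / 2 + 2^-1 *+ K); last by rewrite -[_ *+ K]mulr_natr; field.
    by rewrite lerD2l.
  rewrite [X in _ <= X](_ : qy R Rs Ys y = K%:R^-1 * (qy R Rs Ys y * K%:R)); last first.
    by rewrite mulrCA mulVf // mulr1.
  rewrite ler_wpM2l ?invr_ge0 ?ler0n // ler_wpM2l //.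
set err := err_prob R Rs Ys g.
set corr := \sum_k \sum_(y | g y == k) J k y.
have ce : corr + err = 1.
  rewrite -Bsum /corr /err /err_prob -big_split /=; apply: eq_bigr => k _.
  by rewrite [in RHS](bigID (fun y => g y == k)).
have Asum : \sum_k \sum_y J k y * ln (t k y) = ln (K%:R / 2 : R) * corr + ln (2^-1 : R) * err.
  rewrite /corr /err /err_prob !mulr_sumr -big_split /=; apply: eq_bigr => k _.
  rewrite (bigID (fun y => g y == k)) /= !mulr_sumr; congr (_ + _).
    by apply: eq_bigr => y h; rewrite /t h mulrC.
  by apply: eq_bigr => y /negbTE h; rewrite /t h mulrC.
have split : \sum_k \sum_y (J k y * ln (t k y) + J k y - Q y * t k y)
   = \sum_k \sum_y J k y * ln (t k y) + \sum_k \sum_y J k y - \sum_k \sum_y Q y * t k y.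
  rewrite -big_split -sumrB /=; apply: eq_bigr => k _.
  by rewrite -big_split -sumrB.
move: key; rewrite split hRHS Asum Bsum.
rewrite ln_div ?posrE ?ltr0n //; last by apply: leq_trans K2.
rewrite lnV ?posrE // => key.
have X : (1 - eps) * ln (K%:R : R) - ln 2 <= K%:R^-1 * ln (Rs%:R : R) * (m * Rs)%:R.
  have e2 : corr = 1 - err by rewrite -ce addrK.
  have h1 : (1 - eps) * ln (K%:R : R) <= corr * ln (K%:R : R).
    by rewrite ler_wpM2r // e2 lerB.
  rewrite e2 in h1 key.
  lra.
rewrite ceil_le_int.
have -> : (m%:~R : R) = (K%:R / Rs%:R / ln (Rs%:R : R)) * (K%:R^-1 * ln (Rs%:R : R) * (m * Rs)%:R).
  rewrite natrM; field; rewrite Kn0 Rn0 gt_eqF //.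
rewrite [X in X <= _](_ : _ = (K%:R / Rs%:R / ln (Rs%:R : R)) * ((1 - eps) * ln (K%:R : R) - ln 2)); last by ring.
by rewrite ler_wpM2l // !divr_ge0 ?ler0n // ltW.
Qed.
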